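(* Let $K\ge1$, let $g_1,\dots,g_K$ be positive integers, let $w\in\mathbb{C}$ and $y_{i,\ell}\in\mathbb{C}$ ($1\le i\le K$, $1\le\ell\le g_i$). Treat $x$ and $\overline{x}$ as two independent variables, and for a rational function $R(x,\overline{x})$ let $\overline{R}$ denote the function obtained by conjugating all coefficients and interchanging the roles of $x$ and $\overline{x}$. Define recursively $$Q_1=-\sum_{\ell=1}^{g_1}\frac{1}{\overline{x}-\overline{y_{1,\ell}}},\qquad Q_j=-\sum_{\ell=1}^{g_j}\frac{1}{\overline{x}-\overline{y_{j,\ell}}+\sum_{i=1}^{j-1}\overline{Q_i}}\quad(2\le j\le K),$$ $$D_1=\prod_{\ell=1}^{g_1}(\overline{x}-\overline{y_{1,\ell}}),\qquad D_j=\prod_{\ell=1}^{g_j}\Big(\overline{x}-\overline{y_{j,\ell}}+\sum_{i=1}^{j-1}\overline{Q_i}\Big)\cdot\Big(\prod_{k=1}^{j-1}\overline{D_k}\Big)^{g_j}\quad(2\le j\le K),$$ (each $D_j$ is a polynomial in $x,\overline{x}$), and set $$P=\Big(x-w+\sum_{k=1}^K Q_k\Big)\prod_{i=1}^K D_i,\qquad \hat P=(x-w)\prod_{i=1}^K D_i .$$ Let $F(Z)=\prod_{i=1}^K(1+g_iZ)$, $E_K=\frac{F(1)+F(-1)}{2}$ and $O_K=\frac{F(1)-F(-1)}{2}$. Then (a) $\deg(P)=\deg(\hat P)$; (b) $\deg(P)=(E_K,O_K)$.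
   Context: For a polynomial $\rho$ in two variables $x,\overline{x}$, the degree vector is $\deg(\rho)=(\deg_x\rho,\deg_{\overline{x}}\rho)$, where $\deg_x\rho$ is the highest exponent of $x$ appearing in $\rho$ and $\deg_{\overline{x}}\rho$ the highest exponent of $\overline{x}$. The polynomial $P$ is the ''lensing polynomial'' obtained by clearing denominators in the multiplane point-mass lensing equation, with all masses and inter-plane scaling constants set equal to $1$. *)

(* Defs.v *)
From HB Require Import structures.
From mathcomp Require Import all_boot all_order all_algebra polyXY fraction.
From mathcomp Require Import generic_quotient.
From mathcomp Require Export complex.
From mathcomp Require Export reals.
Set Implicit Arguments. Unset Strict Implicit. Unset Printing Implicit Defensive.
Import Order.TTheory GRing.Theory Num.Theory.
Local Open Scope ring_scope.

Section Lensing.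
Variable C : numClosedFieldType.

(* Bivariate polynomials: the outer variable 'X of {poly {poly C}} is x,
   the inner variable 'Y (= 'X%:P, see polyXY.v) is xbar. *)
Definition bipoly := {poly {poly C}}.
Definition rfun := {fraction {poly {poly C}}}.

Definition tofr (p : bipoly) : rfun := FracField.tofrac p.

Definition Xr : rfun := tofr 'X.
Definition Xbr : rfun := tofr 'Y.
Definition cstr (c : C) : rfun := tofr (c%:P%:P).

Definition deg_x (p : bipoly) : nat := (size p).-1.
Definition deg_xb (p : bipoly) : nat := (sizeY p).-1.
Definition degv (p : bipoly) : nat * nat := (deg_x p, deg_xb p).

Definition barP (p : bipoly) : bipoly :=
  swapXY (map_poly (map_poly (@Num.conj_op C)) p).

(* bar on rational functions: apply barP to numerator and denominator of a
   representative (well defined since barP is an injective ring map) *)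
Definition barF (f : rfun) : rfun :=
  let r := repr f in tofr (barP (frac r).1) / tofr (barP (frac r).2).

(* QDs g y j = [:: (Q_1, D_1); ...; (Q_j, D_j)]  (0-based indices in g, y:
   the paper's Q_{j+1} uses g j and y j l, l < g j). *)
Fixpoint QDs (g : nat -> nat) (y : nat -> nat -> C) (j : nat)
  : seq (rfun * rfun) :=
  match j with
  | 0 => [::]
  | j'.+1 =>
      let s := QDs g y j' in
      let sQ := \sum_(qd <- s) barF qd.1 in
      let Qj := - \sum_(l < g j') (Xbr - cstr (y j' l)^* + sQ)^-1 in
      let Dj := (\prod_(l < g j') (Xbr - cstr (y j' l)^* + sQ))
                 * (\prod_(qd <- s) barF qd.2) ^+ g j' in
      rcons s (Qj, Dj)
  end.

Definition Pfun (K : nat) (g : nat -> nat) (w : C) (y : nat -> nat -> C) : rfun :=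
  (Xr - cstr w + \sum_(qd <- QDs g y K) qd.1) * \prod_(qd <- QDs g y K) qd.2.

Definition Phatfun (K : nat) (g : nat -> nat) (w : C) (y : nat -> nat -> C) : rfun :=
  (Xr - cstr w) * \prod_(qd <- QDs g y K) qd.2.

End Lensing.

Definition Fpoly (K : nat) (g : nat -> nat) (z : rat) : rat :=
  \prod_(i < K) (1 + (g i)%:R * z).
Definition EK (K : nat) (g : nat -> nat) : rat := (Fpoly K g 1 + Fpoly K g (-1)) / 2.
Definition OK (K : nat) (g : nat -> nat) : rat := (Fpoly K g 1 - Fpoly K g (-1)) / 2.

(* Main.v *)
Require Import Defs.
From HB Require Import structures.
From mathcomp Require Import all_boot all_order all_algebra polyXY fraction.
From mathcomp Require Import complex reals.
From mathcomp Require Import generic_quotient ring zify.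
Import Order.TTheory GRing.Theory Num.Theory.
Local Open Scope ring_scope.
Section S_t2.
Set Implicit Arguments. Unset Strict Implicit.
Local Open Scope quotient_scope.
 Variable C : numClosedFieldType.
Local Notation BP := {poly {poly C}}.
Definition cmap : {rmorphism BP -> BP} := map_poly (map_poly (@Num.conj_op C)).
Lemma barPE (p : BP) : barP p = swapXY (cmap p). Proof. by []. Qed.
Lemma barPM (p q : BP) : barP (p * q) = barP p * barP q.
Proof. by rewrite !barPE !rmorphM. Qed.
Lemma barPD (p q : BP) : barP (p + q) = barP p + barP q.
Proof. by rewrite !barPE !rmorphD. Qed.
Lemma barPN (p : BP) : barP (- p) = - barP p.
Proof. by rewrite !barPE !rmorphN. Qed.
Lemma barP1 : barP (1 : BP) = 1.
Proof. by rewrite !barPE !rmorph1. Qed.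
Lemma barP_sum I (r : seq I) (P : pred I) (F : I -> BP) :
  barP (\sum_(i <- r | P i) F i) = \sum_(i <- r | P i) barP (F i).
Proof. by rewrite !barPE rmorph_sum /= rmorph_sum. Qed.
Lemma barP_prod I (r : seq I) (P : pred I) (F : I -> BP) :
  barP (\prod_(i <- r | P i) F i) = \prod_(i <- r | P i) barP (F i).
Proof. by rewrite !barPE rmorph_prod /= rmorph_prod. Qed.

Lemma conj_inj : injective (@Num.conj_op C). Proof. exact: (can_inj conjCK). Qed.
Lemma cmap_inj_in : injective (map_poly (@Num.conj_op C)).
Proof.
move=> p q e; apply/polyP=> i; have := congr1 (fun p : {poly C} => p`_i) e.
by rewrite !coef_map /=; apply: conj_inj.
Qed.

Definition sy (p : BP) := size (swapXY p).

Lemma size_cmap (p : BP) : size (cmap p) = size p.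
Proof. rewrite size_map_inj_poly //; [exact: cmap_inj_in | exact: rmorph0]. Qed.
Lemma sizeY_cmap (p : BP) : sizeY (cmap p) = sizeY p.
Proof.
rewrite /sizeY size_cmap; apply: eq_bigr => i _.
rewrite coef_map /= size_map_inj_poly //; [exact: conj_inj | exact: rmorph0].
Qed.
Lemma size_barP p : size (barP p) = sy p.
Proof. by rewrite barPE -sizeYE sizeY_cmap /sy -sizeYE. Qed.
Lemma sy_barP p : sy (barP p) = size p.
Proof. by rewrite /sy barPE swapXYK size_cmap. Qed.

Lemma pi_frac (x : {ratio BP}) :
  (\pi_({fraction BP}) x) = tofr (\n_x) / tofr (\d_x).
Proof.
have dx := denom_ratioP x.
have dF : tofr \d_x != 0 by rewrite /tofr tofrac_eq0.
apply: (canRL (mulfK dF)); rewrite /tofr.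
unlock FracField.tofrac; rewrite !piE; apply/eqmodP.
rewrite /= FracField.equivfE /= /FracField.mulf !numden_Ratio ?mulf_neq0 ?oner_eq0 //.
by rewrite !mulr1 mulrC.
Qed.

Lemma barP_eq0 (p : BP) : (barP p == 0) = (p == 0).
Proof. by rewrite -size_poly_eq0 size_barP /sy size_poly_eq0 swapXY_eq0. Qed.

Lemma barF_frac (p q : BP) : q != 0 ->
  barF (tofr p / tofr q) = tofr (barP p) / tofr (barP q).
Proof.
move=> q0; rewrite /barF.
set f := tofr p / tofr q.
set r := repr f.
have e : \pi_({fraction BP}) r = f by rewrite /r reprK.
rewrite pi_frac in e.
have d0 := denom_ratioP r.
have /eqP e' : \n_r * q == p * \d_r.
  move/eqP: e; rewrite /f eqr_div ?tofrac_eq0 // -!tofracM.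
  by rewrite /tofr tofrac_eq.
apply/eqP; rewrite eqr_div ?tofrac_eq0 ?barP_eq0 // /tofr -!tofracM -!barPM.
by rewrite e'.
Qed.

Lemma barF_tofr (p : BP) : barF (tofr p) = tofr (barP p).
Proof.
have := @barF_frac p 1 (oner_neq0 _).
by rewrite /tofr tofrac1 divr1 barP1 tofrac1 divr1.
Qed.

End S_t2.
Section S_t3.
Set Implicit Arguments. Unset Strict Implicit.
 Variable C : numClosedFieldType.
Local Notation BP := {poly {poly C}}.
Local Notation sy := (@sy C).

Definition sx (p : BP) : nat := size p.
Lemma sx_eq0 (p : BP) : (sx p == 0%N) = (p == 0).
Proof. by rewrite /sx size_poly_eq0. Qed.
Lemma sx_mul (p q : BP) : p != 0 -> q != 0 -> sx (p * q) = (sx p + sx q).-1.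
Proof. by move=> p0 q0; rewrite /sx size_mul. Qed.
Lemma sx_mul_leq (p q : BP) : (sx (p * q) <= (sx p + sx q).-1)%N.
Proof. by rewrite /sx size_polyMleq. Qed.
Lemma sx_add (p q : BP) : (sx (p + q) <= maxn (sx p) (sx q))%N.
Proof. by rewrite /sx size_polyD. Qed.
Lemma sx_addl (p q : BP) : (sx q < sx p)%N -> sx (p + q) = sx p.
Proof. by rewrite /sx; apply: size_polyDl. Qed.
Lemma sx_opp (p : BP) : sx (- p) = sx p.
Proof. by rewrite /sx size_polyN. Qed.
Lemma sx_barP (p : BP) : sx (barP p) = sy p.
Proof. exact: size_barP. Qed.
Lemma sy_barP' (p : BP) : sy (barP p) = sx p.
Proof. exact: sy_barP. Qed.

Lemma sy_eq0 (p : BP) : (sy p == 0%N) = (p == 0).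
Proof. by rewrite /sy size_poly_eq0 swapXY_eq0. Qed.
Lemma sy_mul (p q : BP) : p != 0 -> q != 0 -> sy (p * q) = (sy p + sy q).-1.
Proof. by move=> p0 q0; rewrite /sy rmorphM size_mul ?swapXY_eq0. Qed.
Lemma sy_mul_leq (p q : BP) : (sy (p * q) <= (sy p + sy q).-1)%N.
Proof. by rewrite /sy rmorphM size_polyMleq. Qed.
Lemma sy_add (p q : BP) : (sy (p + q) <= maxn (sy p) (sy q))%N.
Proof. by rewrite /sy rmorphD size_polyD. Qed.
Lemma sy_addl (p q : BP) : (sy q < sy p)%N -> sy (p + q) = sy p.
Proof. by rewrite /sy rmorphD; apply: size_polyDl. Qed.
Lemma sy_opp (p : BP) : sy (- p) = sy p.
Proof. by rewrite /sy rmorphN size_polyN. Qed.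

Lemma size_prod_const k n (F : 'I_k -> BP) :
  (forall i, sx (F i) = n.+1) -> sx (\prod_(i < k) F i) = (k * n).+1.
Proof.
elim: k F => [|k IH] F hF; first by rewrite big_ord0 /sx size_poly1.
rewrite big_ord_recr /= sx_mul.
- rewrite (IH (fun i => F (widen_ord (leqnSn k) i))) // hF; lia.
- by rewrite -sx_eq0 (IH (fun i => F (widen_ord (leqnSn k) i))).
- by rewrite -sx_eq0 hF.
Qed.
Lemma sy_prod_const k n (F : 'I_k -> BP) :
  (forall i, sy (F i) = n.+1) -> sy (\prod_(i < k) F i) = (k * n).+1.
Proof. by move=> h; rewrite /sy rmorph_prod; apply: size_prod_const. Qed.

Lemma size_sum_le I (r : seq I) (F : I -> BP) n :
  (forall i, (sx (F i) <= n)%N) -> (sx (\sum_(i <- r) F i)%R <= n)%N.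
Proof.
move=> h; elim/big_ind: _ => //; first by rewrite /sx size_poly0.
by move=> a b ha hb; apply: leq_trans (sx_add _ _) _; rewrite geq_max ha hb.
Qed.
Lemma sy_sum_lt I (r : seq I) (F : I -> BP) n :
  (0 < n)%N -> (forall i, (sy (F i) < n)%N) -> (sy (\sum_(i <- r) F i)%R < n)%N.
Proof.
move=> n0 h; elim/big_ind: _ => //; first by rewrite /sy rmorph0 size_poly0.
by move=> a b ha hb; apply: leq_ltn_trans (sy_add _ _) _; rewrite gtn_max ha hb.
Qed.

Lemma size_YC (c : C) : sx ('Y - c%:P%:P : BP) = 1%N.
Proof. by rewrite /sx -polyCB size_polyC -size_poly_eq0 size_XsubC. Qed.
Lemma sy_YC (c : C) : sy ('Y - c%:P%:P) = 2%N.
Proof. by rewrite /sy rmorphB /= swapXY_Y swapXY_polyC map_polyC /= size_XsubC. Qed.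
Lemma size_XC (c : C) : sx ('X - c%:P%:P : BP) = 2%N.
Proof. by rewrite /sx size_XsubC. Qed.
Lemma sy_XC (c : C) : sy ('X - c%:P%:P) = 1%N.
Proof. by rewrite /sy rmorphB /= swapXY_X swapXY_polyC map_polyC /= -polyCB size_polyC -size_poly_eq0 size_XsubC. Qed.

End S_t3.
Unset Implicit Arguments. Set Strict Implicit.
Section S_t4.
 Variable C : numClosedFieldType.
Local Notation BP := {poly {poly C}}.
Local Notation sy := (@sy C).
Local Notation sx := (@sx C).
Variables (g : nat -> nat) (y : nat -> nat -> C).

Definition Lp j (Pi S : BP) (l : 'I_(g j)) : BP :=
  ('Y - ((y j l)^*)%:P%:P) * barP Pi + barP S.
Definition Dp j (Pi S : BP) := \prod_(l < g j) Lp j Pi S l.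
Definition Np j (Pi S : BP) :=
  - (barP Pi * \sum_(l < g j) \prod_(m < g j | m != l) Lp j Pi S m).
Fixpoint st j : BP * BP :=
  match j with
  | 0 => (1, 0)
  | j'.+1 => let p := st j' in
     (p.1 * Dp j' p.1 p.2, p.2 * Dp j' p.1 p.2 + Np j' p.1 p.2 * p.1)
  end.
Fixpoint AB j : nat * nat :=
  match j with
  | 0 => (0%N, 0%N)
  | j'.+1 => let p := AB j' in (p.1 + g j' * p.2, p.2 + g j' * p.1.+1)%N
  end.

Lemma Lp_size j (Pi S : BP) A B l :
  sx Pi = A.+1 -> sy Pi = B.+1 -> (sx S <= sx Pi)%N -> (sy S < sy Pi)%N ->
  sx (Lp j Pi S l) = B.+1 /\ sy (Lp j Pi S l) = A.+2.
Proof.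
move=> sP yP sS yS.
have P0 : Pi != 0 by rewrite -sx_eq0 sP.
have bP0 : barP Pi != 0 by rewrite barP_eq0.
have YC0 : ('Y - ((y j l)^*)%:P%:P : BP) != 0 by rewrite -sx_eq0 size_YC.
split.
  by rewrite /Lp sx_addl sx_mul // size_YC sx_barP ?yP //; rewrite ?sx_barP; lia.
by rewrite /Lp sy_addl sy_mul // sy_YC sy_barP' ?sP //; rewrite ?sy_barP'; lia.
Qed.

Lemma st_inv j : let p := st j in let a := AB j in
  [/\ sx p.1 = a.1.+1, sy p.1 = a.2.+1, (sx p.2 <= sx p.1)%N & (sy p.2 < sy p.1)%N].
Proof.
elim: j => [|j IH] /=.
  rewrite /sx size_poly1 size_poly0 /sy rmorph1 rmorph0 size_poly1 size_poly0; by split.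
case: IH; set Pi := (st j).1; set S := (st j).2; set A := (AB j).1; set B := (AB j).2.
move=> sP yP sS yS.
have P0 : Pi != 0 by rewrite -sx_eq0 sP.
have hL := fun l => @Lp_size j Pi S A B l sP yP sS yS.
have sD : sx (Dp j Pi S) = (g j * B).+1.
  by apply: size_prod_const => l; case: (hL l).
have yD : sy (Dp j Pi S) = (g j * A.+1).+1.
  by apply: sy_prod_const => l; case: (hL l).
have D0 : Dp j Pi S != 0 by rewrite -sx_eq0 sD.
have hT : forall l : 'I_(g j), sx (barP Pi * \prod_(m < g j | m != l) Lp j Pi S m) = sx (Dp j Pi S)
   /\ (sy (barP Pi * \prod_(m < g j | m != l) Lp j Pi S m)).+1 = sy (Dp j Pi S).
  move=> l; set R := \prod_(m < g j | m != l) Lp j Pi S m.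
  have eD : Dp j Pi S = Lp j Pi S l * R by rewrite /Dp (bigD1 l).
  have R0 : R != 0 by move: D0; rewrite eD mulf_eq0 negb_or => /andP[].
  have L0 : Lp j Pi S l != 0 by move: D0; rewrite eD mulf_eq0 negb_or => /andP[].
  have bP0 : barP Pi != 0 by rewrite barP_eq0.
  case: (hL l) => sL yL.
  have R1 : (0 < sy R)%N by rewrite lt0n sy_eq0.
  rewrite eD sx_mul // sy_mul // sx_mul // sy_mul // sx_barP sy_barP' sL yL yP sP.
  split; lia.
have sN : (sx (Np j Pi S) <= sx (Dp j Pi S))%N.
  rewrite /Np sx_opp mulr_sumr; apply: size_sum_le => l.
  by case: (hT l) => -> _.
have yN : (sy (Np j Pi S) < sy (Dp j Pi S))%N.
  rewrite /Np sy_opp mulr_sumr; apply: sy_sum_lt; first by rewrite yD.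
  by move=> l; case: (hT l) => _ <-.
split.
- by rewrite sx_mul // sP sD; lia.
- by rewrite sy_mul // yP yD; lia.
- rewrite [sx (Pi * _)]sx_mul //; apply: leq_trans (sx_add _ _) _; rewrite geq_max.
  apply/andP; split.
    apply: leq_trans (sx_mul_leq _ _) _; lia.
  apply: leq_trans (sx_mul_leq _ _) _; lia.
- rewrite [sy (Pi * _)]sy_mul //; apply: leq_ltn_trans (sy_add _ _) _; rewrite gtn_max.
  have y1 : (0 < sy Pi)%N by rewrite yP.
  have y2 : (0 < sy (Dp j Pi S))%N by rewrite yD.
  apply/andP; split.
    apply: leq_ltn_trans (sy_mul_leq _ _) _; lia.
  apply: leq_ltn_trans (sy_mul_leq _ _) _; lia.
Qed.

End S_t4.
Section S_t5.
 Variable C : numClosedFieldType.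
Local Notation BP := {poly {poly C}}.
Local Notation sy := (@sy C).
Local Notation sx := (@sx C).
Variables (g : nat -> nat) (y : nat -> nat -> C).

Lemma QDsS j : QDs g y j.+1 = rcons (QDs g y j)
  (- \sum_(l < g j) (Xbr C - cstr (y j l)^* + \sum_(qd <- QDs g y j) barF qd.1)^-1,
   (\prod_(l < g j) (Xbr C - cstr (y j l)^* + \sum_(qd <- QDs g y j) barF qd.1))
     * (\prod_(qd <- QDs g y j) barF qd.2) ^+ g j).
Proof. by []. Qed.

Lemma div_cancel (F : fieldType) (a b c : F) : c != 0 -> a / b = a * c / (b * c).
Proof. by move=> c0; rewrite invfM mulrACA divff // mulr1. Qed.

Lemma sum_rcons T (F : T -> rfun C) s x :
  \sum_(i <- rcons s x) F i = \sum_(i <- s) F i + F x.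
Proof. by rewrite -cats1 big_cat big_seq1. Qed.
Lemma prod_rcons T (F : T -> rfun C) s x :
  \prod_(i <- rcons s x) F i = \prod_(i <- s) F i * F x.
Proof. by rewrite -cats1 big_cat big_seq1. Qed.

Lemma tofr_add (a b c d : BP) : b != 0 -> d != 0 ->
  tofr a / tofr b + tofr c / tofr d = tofr (a * d + c * b) / tofr (b * d).
Proof.
move=> b0 d0; rewrite addf_div ?tofrac_eq0 //.
by rewrite /tofr tofracD !tofracM.
Qed.

Lemma barP0 : barP (0 : BP) = 0. Proof. by rewrite barPE !rmorph0. Qed.

Lemma st_neq0 j : (st C g y j).1 != 0.
Proof. by case: (st_inv C g y j) => h _ _ _; rewrite -sx_eq0 h. Qed.

Lemma QDs_inv j :
 [/\ \sum_(qd <- QDs g y j) qd.1 = tofr (st C g y j).2 / tofr (st C g y j).1,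
     \prod_(qd <- QDs g y j) qd.2 = tofr (st C g y j).1,
     \sum_(qd <- QDs g y j) barF qd.1 = tofr (barP (st C g y j).2) / tofr (barP (st C g y j).1)
   & \prod_(qd <- QDs g y j) barF qd.2 = tofr (barP (st C g y j).1)].
Proof.
elim: j => [|j IH].
  by rewrite /= !big_nil barP0 barP1 /tofr tofrac0 tofrac1 mul0r.
have P1 := st_neq0 j.+1.
rewrite QDsS; case: IH.
move: P1 => /=.
set Pi := (st C g y j).1; set S := (st C g y j).2.
move=> P1 e1 e2 e3 e4.
clearbody Pi S.
rewrite e3 e4.
have P0 : Pi != 0 by move: P1; rewrite mulf_eq0 negb_or => /andP[].
have D0 : Dp C g y j Pi S != 0 by move: P1; rewrite mulf_eq0 negb_or => /andP[].
have bP0 : barP Pi != 0 by rewrite barP_eq0.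
have tbP0 : tofr (barP Pi) != 0 by rewrite /tofr tofrac_eq0.
have key : forall l : 'I_(g j), Xbr C - cstr (y j l)^* + tofr (barP S) / tofr (barP Pi)
   = tofr (Lp C g y j Pi S l) / tofr (barP Pi).
  move=> l; rewrite /Lp /tofr tofracD tofracM mulrDl mulfK //.
  by rewrite /Xbr /cstr /tofr tofracB.
have hD : \prod_(l < g j) (Xbr C - cstr (y j l)^* + tofr (barP S) / tofr (barP Pi))
     * tofr (barP Pi) ^+ g j = tofr (Dp C g y j Pi S).
  under eq_bigr => l _ do rewrite key.
  rewrite prodf_div prodr_const card_ord divfK ?expf_neq0 //.
  by rewrite /Dp /tofr rmorph_prod.
have hQ : - \sum_(l < g j) (Xbr C - cstr (y j l)^* + tofr (barP S) / tofr (barP Pi))^-1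
     = tofr (Np C g y j Pi S) / tofr (Dp C g y j Pi S).
  under eq_bigr => l _ do rewrite key invf_div.
  rewrite /Np /tofr tofracN tofracM rmorph_sum mulNr mulr_sumr mulr_suml.
  apply/eqP; rewrite eqr_opp; apply/eqP.
  apply: eq_bigr => l _.
  have eD : Dp C g y j Pi S = Lp C g y j Pi S l * \prod_(m < g j | m != l) Lp C g y j Pi S m.
    by rewrite /Dp (bigD1 l).
  have L0 : Lp C g y j Pi S l != 0 by move: D0; rewrite eD mulf_eq0 negb_or => /andP[].
  have R0 : \prod_(m < g j | m != l) Lp C g y j Pi S m != 0.
    by move: D0; rewrite eD mulf_eq0 negb_or => /andP[].
  rewrite eD tofracM; apply: div_cancel.
  by rewrite tofrac_eq0.
rewrite hQ hD !sum_rcons !prod_rcons e1 e2 e3 e4.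
cbn [fst snd].
have tP0 : tofr Pi != 0 by rewrite /tofr tofrac_eq0.
have tD0 : tofr (Dp C g y j Pi S) != 0 by rewrite /tofr tofrac_eq0.
have bD0 : barP (Dp C g y j Pi S) != 0 by rewrite barP_eq0.
have tbD0 : tofr (barP (Dp C g y j Pi S)) != 0 by rewrite /tofr tofrac_eq0.
rewrite barF_frac // barF_tofr.
split.
- exact: tofr_add.
- by rewrite /tofr tofracM.
- rewrite barPD !barPM; apply: tofr_add; by rewrite barP_eq0.
- by rewrite barPM /tofr tofracM.
Qed.
End S_t5.


Lemma FpolyS j g z : Fpoly j.+1 g z = Fpoly j g z * (1 + (g j)%:R * z).
Proof. by rewrite /Fpoly big_ord_recr. Qed.

Lemma AB_F (g : nat -> nat) j :
  ((AB g j).1.+1%:R + (AB g j).2%:R = Fpoly j g 1 :> rat) /\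
  ((AB g j).1.+1%:R - (AB g j).2%:R = Fpoly j g (-1) :> rat).
Proof.
elim: j => [|j [IH1 IH2]].
  rewrite /Fpoly !big_ord0; cbn [AB fst snd].
  by split; rewrite mulr0n ?addr0 ?subr0.
rewrite !FpolyS -IH1 -IH2.
cbn [AB].
move: (AB g j) (g j) => [a b] n; cbn [fst snd].
rewrite -!natr1 !natrD !natrM -!natr1.
move: (a%:R : rat) (b%:R : rat) (n%:R : rat) => A B N.
split; ring.
Qed.

Lemma main_C (C : numClosedFieldType) K g (w : C) y :
  exists p ph : {poly {poly C}}, tofr p = Pfun K g w y /\ tofr ph = Phatfun K g w y /\
    sx p = ((AB g K).1).+2 /\ sy p = ((AB g K).2).+1 /\
    sx ph = ((AB g K).1).+2 /\ sy ph = ((AB g K).2).+1.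
Proof.
case: (st_inv C g y K) => sP yP sS yS.
case: (QDs_inv C g y K) => e1 e2 _ _.
have P0 := st_neq0 C g y K.
move: sP yP sS yS e1 e2 P0.
move: (st C g y K).1 (st C g y K).2 (AB g K).1 (AB g K).2 => Pi S A B.
move=> sP yP sS yS e1 e2 P0.
exists (('X - w%:P%:P) * Pi + S), (('X - w%:P%:P) * Pi).
have XC0 : ('X - w%:P%:P : {poly {poly C}}) != 0 by rewrite -sx_eq0 size_XC.
have hx : sx (('X - w%:P%:P) * Pi) = A.+2 by rewrite sx_mul // size_XC sP.
have hy : sy (('X - w%:P%:P) * Pi) = B.+1 by rewrite sy_mul // sy_XC yP.
have tP0 : tofr Pi != 0 by rewrite /tofr tofrac_eq0.
split.
  rewrite /Pfun e1 e2 [RHS]mulrDl divfK //.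
  by rewrite /Xr /cstr /tofr tofracD tofracM tofracB.
split.
  by rewrite /Phatfun e2 /Xr /cstr /tofr tofracM tofracB.
split; first by rewrite sx_addl hx //; lia.
split; first by rewrite sy_addl hy //; lia.
by [].
Qed.

Lemma half1 (F : numFieldType) (x y : F) : (x + y + (x - y)) / 2 = x.
Proof. by field. Qed.
Lemma half2 (F : numFieldType) (x y : F) : (x + y - (x - y)) / 2 = y.
Proof. by field. Qed.

Theorem proposition1 (R : realType) (K : nat) (g : nat -> nat) (w : R[i])
    (y : nat -> nat -> R[i]) :
  (1 <= K)%N -> (forall i, (i < K)%N -> (0 < g i)%N) ->
  exists p ph : {poly {poly R[i]}},
    tofr p = Pfun K g w y /\ tofr ph = Phatfun K g w y /\
    degv p = degv ph /\
    (((deg_x p)%:R : rat), ((deg_xb p)%:R : rat)) = (EK K g, OK K g).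
Proof.
move=> _ _.
case: (main_C _ K g w y) => p [ph [e1 [e2 [h1 [h2 [h3 h4]]]]]].
exists p, ph; split => //; split => //.
have dx : forall q : {poly {poly R[i]}}, deg_x q = (sx q).-1 by [].
have dy : forall q : {poly {poly R[i]}}, deg_xb q = (sy q).-1.
  by move=> q; rewrite /deg_xb sizeYE.
rewrite /degv !dx !dy h1 h2 h3 h4 /=; split => //.
rewrite /EK /OK; case: (AB_F g K) => <- <-.
by rewrite half1 half2.
Qed.
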